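(* Let $X(1),\dots,X(n)$ be UVs with values in $\mathscr{X}$ and $Y(1),\dots,Y(n)$ UVs with values in $\mathscr{Y}$ on a common sample space, $X(1:n)=(X(1),\dots,X(n))$, $Y(1:n)=(Y(1),\dots,Y(n))$, such that $[\![X(1:n)]\!]=[\![X(1)]\!]\times\cdots\times[\![X(n)]\!]$ and, for every $x(1:n)\in[\![X(1:n)]\!]$, $[\![Y(1:n)|x(1:n)]\!]=[\![Y(1)|x(1)]\!]\times\cdots\times[\![Y(n)|x(n)]\!]$. Under the product uncertainty assumption and the union bound assumption, $$I_0(Y(1:n);X(1:n))=\sum_{i=1}^n I_0(Y(i);X(i)).$$
   Context: A UV is a map $U$ from a sample space $\Omega$ to a set; $[\![U]\!]=\{U(\omega)\}$; $[\![U|w]\!]=\{U(\omega):W(\omega)=w\}$, $[\![U|W]\!]=\{[\![U|w]\!]:w\in[\![W]\!]\}$; $X(1:n)(\omega)=(X(1)(\omega),\dots,X(n)(\omega))$. An uncertainty function on a set $\mathscr{U}$ is a map $m$ on subsets of $\mathscr{U}$ with $m(\emptyset)=0$, $0<m(S)<\infty$ for nonempty $S$, $\max\{m(S_1),m(S_2)\}\le m(S_1\cup S_2)$. Here $m_{\mathscr{Y}}$ is defined on subsets of $\mathscr{Y}^k$ for every $k\ge1$, is an uncertainty function on each, and $m_{\mathscr{Y}}(\mathscr{Y}^k)=1$. Product uncertainty assumption: for every $k$ and $S_1,\dots,S_k\subseteq\mathscr{Y}$, $m_{\mathscr{Y}}(S_1\times\cdots\times S_k)=\prod_i m_{\mathscr{Y}}(S_i)$.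 Union bound assumption: $m_{\mathscr{Y}}(S_1\cup S_2)\le m_{\mathscr{Y}}(S_1)+m_{\mathscr{Y}}(S_2)$ for all $S_1,S_2\subseteq\mathscr{Y}^k$. $\delta$-mutual information: for UVs $U$ (with uncertainty function $m_{\mathscr{U}}$) and $W$, $u,u'\in[\![U]\!]$ are $\delta$-connected via $[\![U|W]\!]$ if there are $w_1,\dots,w_N\in[\![W]\!]$ with $u\in[\![U|w_1]\!]$, $u'\in[\![U|w_N]\!]$, $m_{\mathscr{U}}([\![U|w_i]\!]\cap[\![U|w_{i-1}]\!])/m_{\mathscr{U}}([\![U]\!])>\delta$ for $1<i\le N$; a set is $\delta$-connected if all pairs of its points are. A $\delta$-overlap family $[\![U|W]\!]^*_\delta$ is a family of distinct subsets covering $[\![U]\!]$, of largest cardinality among covering families with (i) each member $\delta$-connected and containing some $[\![U|w]\!]$; (ii) distinct members $S_1,S_2$ satisfy $m_{\mathscr{U}}(S_1\cap S_2)\le\delta\,m_{\mathscr{U}}([\![U]\!])$; (iii) each $[\![U|w]\!]$ contained in some member. $I_\delta(U;W)=\log_2|[\![U|W]\!]^*_\delta|$ if such a family exists, else $0$. *)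

(* Defs.v *)
From HB Require Import structures.
From mathcomp Require Import all_boot all_order all_algebra.
From mathcomp Require Import all_classical all_reals.
From mathcomp Require Import exp.
Set Implicit Arguments. Unset Strict Implicit. Unset Printing Implicit Defensive.
Import Order.TTheory GRing.Theory Num.Theory.
Local Open Scope classical_set_scope.
Local Open Scope ring_scope.
Local Open Scope card_scope.

Definition uv_range {Omega TU : Type} (U : Omega -> TU) : set TU := range U.

Definition uv_cond {Omega TU TW : Type} (U : Omega -> TU) (W : Omega -> TW)
  (w : TW) : set TU := U @` (W @^-1` [set w]).

Definition uncertainty_fun {R : realType} {TU : Type} (m : set TU -> R) : Prop :=
  [/\ m set0 = 0,
      (forall S, S !=set0 -> 0 < m S) &
      (forall S1 S2, Num.max (m S1) (m S2) <= m (S1 `|` S2))].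

Definition dconnected {R : realType} {Omega TU TW : Type}
  (mU : set TU -> R) (U : Omega -> TU) (W : Omega -> TW) (delta : R)
  (u u' : TU) : Prop :=
  exists (N : nat) (w : nat -> TW),
    [/\ (0 < N)%N,
        (forall i, (i < N)%N -> range W (w i)),
        uv_cond U W (w 0%N) u,
        uv_cond U W (w N.-1) u' &
        (forall i, (0 < i)%N -> (i < N)%N ->
           mU (uv_cond U W (w i) `&` uv_cond U W (w i.-1)) / mU (uv_range U)
             > delta)].

Definition dconnected_set {R : realType} {Omega TU TW : Type}
  (mU : set TU -> R) (U : Omega -> TU) (W : Omega -> TW) (delta : R)
  (S : set TU) : Prop :=
  forall u u', S u -> S u' -> dconnected mU U W delta u u'.

Definition admissible_family {R : realType} {Omega TU TW : Type}
  (mU : set TU -> R) (U : Omega -> TU) (W : Omega -> TW) (delta : R)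
  (F : set (set TU)) : Prop :=
  [/\ (forall S, F S -> S `<=` uv_range U),
      \bigcup_(S in F) S = uv_range U,
      (forall S, F S -> dconnected_set mU U W delta S /\
                        exists2 w, range W w & uv_cond U W w `<=` S),
      (forall S1 S2, F S1 -> F S2 -> S1 <> S2 ->
                        mU (S1 `&` S2) <= delta * mU (uv_range U)) &
      (forall w, range W w -> exists2 S, F S & uv_cond U W w `<=` S)].

Definition overlap_family {R : realType} {Omega TU TW : Type}
  (mU : set TU -> R) (U : Omega -> TU) (W : Omega -> TW) (delta : R)
  (F : set (set TU)) : Prop :=
  admissible_family mU U W delta F /\
  forall G, admissible_family mU U W delta G -> (G #<= F).

Definition log2 {R : realType} (x : R) : R := ln x / ln 2.

(* I_delta(U;W) = log2 |[[U|W]]*_delta| if such a family exists, else 0;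
   valued in the extended reals, +oo when the (maximal) family is infinite. *)
Definition Idelta {R : realType} {Omega TU TW : Type}
  (mU : set TU -> R) (U : Omega -> TU) (W : Omega -> TW) (delta : R)
  : \bar R :=
  match pselect (exists F, overlap_family mU U W delta F) with
  | left P =>
      let F := projT1 (cid P) in
      match pselect (exists n, F #= `I_n) with
      | left Q => (log2 ((projT1 (cid Q))%:R : R))%:E
      | right _ => +oo%E
      end
  | right _ => 0%E
  end.

(* Y^k is represented as 'I_k -> Y; Y^1 is identified with Y. *)
Definition m_one {R : realType} {Y : Type} (m : forall k : nat, set ('I_k -> Y) -> R)
  (S : set Y) : R := m 1%N [set f | S (f ord0)].

Definition uncertainty_family {R : realType} {Y : Type}
  (m : forall k : nat, set ('I_k -> Y) -> R) : Prop :=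
  forall k, (0 < k)%N -> uncertainty_fun (m k) /\ m k setT = 1.

Definition product_uncertainty {R : realType} {Y : Type}
  (m : forall k : nat, set ('I_k -> Y) -> R) : Prop :=
  forall k, (0 < k)%N -> forall S : 'I_k -> set Y,
    m k [set f | forall i, S i (f i)] = \prod_(i < k) m_one m (S i).

Definition union_bound {R : realType} {Y : Type}
  (m : forall k : nat, set ('I_k -> Y) -> R) : Prop :=
  forall k, (0 < k)%N -> forall S1 S2 : set ('I_k -> Y),
    m k (S1 `|` S2) <= m k S1 + m k S2.

Definition uv_tuple {Omega T : Type} {n : nat} (X : 'I_n -> Omega -> T)
  : Omega -> ('I_n -> T) := fun o i => X i o.

(* Main.v *)
Require Import Defs.
From HB Require Import structures.
From mathcomp Require Import all_boot all_order all_algebra.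
From mathcomp Require Import all_classical all_reals.
From mathcomp Require Import exp.
From mathcomp Require Import finmap.
From mathcomp Require Import zify.
Import Order.TTheory GRing.Theory Num.Theory.
Local Open Scope classical_set_scope.
Local Open Scope ring_scope.
Local Open Scope card_scope.
Set Implicit Arguments. Unset Strict Implicit.

Section Chain.
Context {Omega TU TW : Type}.
Variables (U : Omega -> TU) (W : Omega -> TW).

Definition chain (u u' : TU) := exists N (w : nat -> TW),
  [/\ (0 < N)%N, (forall i, (i < N)%N -> range W (w i)),
      uv_cond U W (w 0%N) u, uv_cond U W (w N.-1) u' &
      (forall i, (0 < i)%N -> (i < N)%N ->
         (uv_cond U W (w i) `&` uv_cond U W (w i.-1)) !=set0)].

Lemma cond_sub w : uv_cond U W w `<=` uv_range U.
Proof. by move=> _ [o _ <-]; exists o. Qed.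

Lemma chain_range u u' : chain u u' -> uv_range U u /\ uv_range U u'.
Proof. by move=> [N [w [_ _ H0 H1 _]]]; split; apply: cond_sub H0 || apply: cond_sub H1. Qed.

Lemma chain_sym u u' : chain u u' -> chain u' u.
Proof.
move=> [N [w [N0 Hr H0 H1 Hi]]].
exists N, (fun i => w (N.-1 - i)%N); split => //.
- move=> i iN; apply: Hr; lia.
- by rewrite subn0.
- by rewrite subnn.
- move=> i i0 iN; have := Hi (N - i)%N ltac:(lia) ltac:(lia).
  have -> : (N.-1 - i = (N - i).-1)%N by lia.
  have -> : (N.-1 - i.-1 = N - i)%N by lia.
  by rewrite setIC.
Qed.

Lemma chain_trans u v z : chain u v -> chain v z -> chain u z.
Proof.
move=> [N1 [w1 [N10 Hr1 H01 H11 Hi1]]] [N2 [w2 [N20 Hr2 H02 H12 Hi2]]].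
exists (N1 + N2)%N, (fun i => if (i < N1)%N then w1 i else w2 (i - N1)%N); split.
- lia.
- move=> i iN; case: (ltnP i N1) => h; [apply: Hr1 | apply: Hr2]; lia.
- by rewrite N10.
- case: ltnP => h; first lia.
  by have -> : ((N1 + N2).-1 - N1 = N2.-1)%N by lia.
- move=> i i0 iN; case: (ltnP i N1) => h1; case: (ltnP i.-1 N1) => h2.
  + exact: Hi1.
  + lia.
  + have e1 : (i - N1 = 0)%N by lia.
    have e2 : i.-1 = N1.-1 by lia.
    by rewrite e1 e2; exists v.
  + have := Hi2 (i - N1)%N ltac:(lia) ltac:(lia).
    by have -> : ((i - N1).-1 = i.-1 - N1)%N by lia.
Qed.

Lemma single o : uv_cond U W (W o) `<=` [set u' | chain (U o) u'].
Proof.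
move=> v cv; exists 1%N, (fun _ => W o); split.
- by [].
- by move=> i _; exists o.
- by exists o.
- exact: cv.
- move=> i; lia.
Qed.

Lemma chain_refl u : uv_range U u -> chain u u.
Proof. by case=> o _ <-; apply: single; exists o. Qed.

Definition cls u := [set u' | chain u u'].
Definition Comp := [set S | exists2 u, uv_range U u & S = cls u].

End Chain.

Section Meas.
Context {R : realType} {Omega TU TW : Type}.
Variables (mU : set TU -> R) (U : Omega -> TU) (W : Omega -> TW).
Hypothesis m0 : mU set0 = 0.
Hypothesis mpos : forall S, S !=set0 -> 0 < mU S.

Lemma ratio_pos A B : A `<=` B -> (0 < mU A / mU B) <-> A !=set0.
Proof.
move=> AB; split.
- by move=> h; apply/set0P/negP => /eqP A0; move: h; rewrite A0 m0 mul0r ltxx.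
- move=> [a Aa]; apply: divr_gt0; apply: mpos; [by exists a | by exists a; apply: AB].
Qed.

Lemma dconnE u u' : dconnected mU U W 0 u u' <-> chain U W u u'.
Proof.
split=> -[N [w [N0 Hr H0 H1 Hi]]]; exists N, w; split => // i i0 iN;
  have sub : uv_cond U W (w i) `&` uv_cond U W (w i.-1) `<=` uv_range U
    by move=> z [cz _]; exact: cond_sub cz.
- exact: (ratio_pos sub).1 (Hi i i0 iN).
- exact: (ratio_pos sub).2 (Hi i i0 iN).
Qed.

Lemma Comp_adm : admissible_family mU U W 0 (Comp U W).
Proof.
split.
- by move=> S [u ru ->] v cv; exact: (chain_range cv).2.
- apply/seteqP; split.
  + by move=> v [S [u ru ->]] cv; exact: (chain_range cv).2.
  + by move=> v rv; exists (cls U W v); [exists v | exact: chain_refl].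
- move=> S [u ru ->]; split.
  + by move=> a b ca cb; apply/dconnE; apply: chain_trans (chain_sym ca) cb.
  + by case: ru => o _ <-; exists (W o); [exists o | exact: single].
- move=> S1 S2 [u1 r1 ->] [u2 r2 ->] neq.
  have -> : cls U W u1 `&` cls U W u2 = set0.
    apply/seteqP; split => // v [c1 c2]; apply: neq.
    apply/seteqP; split => z cz.
    + exact: chain_trans c2 (chain_trans (chain_sym c1) cz).
    + exact: chain_trans c1 (chain_trans (chain_sym c2) cz).
  by rewrite m0 mul0r.
- move=> w [o _ <-]; exists (cls U W (U o)); last exact: single.
  by exists (U o) => //; exists o.
Qed.

Lemma adm_cls G S u : admissible_family mU U W 0 G -> G S -> S u -> S = cls U W u.
Proof.
move=> [Gsub Gcov Gconn Gdisj Gcond] GS Su.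
have key : forall w, range W w -> (uv_cond U W w `&` S) !=set0 ->
    uv_cond U W w `<=` S.
  move=> w rw [z [cz Sz]]; have [S' GS' cS'] := Gcond w rw.
  suff -> : S = S' by [].
  apply: contrapT => neq.
  have h1 := Gdisj _ _ GS GS' neq; rewrite mul0r in h1.
  have h2 : 0 < mU (S `&` S') by apply: mpos; exists z; split => //; exact: cS'.
  by have := lt_le_trans h2 h1; rewrite ltxx.
apply/seteqP; split.
- by move=> v Sv; apply/dconnE; exact: (Gconn S GS).1 u v Su Sv.
- move=> v [N [w [N0 Hr H0 H1 Hi]]].
  suff h : forall j, (j < N)%N -> uv_cond U W (w j) `<=` S.
    by apply: (h N.-1) H1; lia.
  elim => [_|j IH jN].
    by apply: key (Hr 0%N N0) _; exists u.
  apply: key (Hr _ jN) _; have [z [z1 z2]] := Hi j.+1 isT jN.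
  by exists z; split => //; apply: IH (ltnW jN) _ z2.
Qed.

Lemma adm_eq G : admissible_family mU U W 0 G -> G = Comp U W.
Proof.
move=> HG; have HG' := HG; case: HG' => [Gsub Gcov Gconn Gdisj Gcond].
apply/seteqP; split.
- move=> S GS; have [_ [_ [o _ <-] sub]] := Gconn S GS.
  have Su : S (U o) by apply: sub; exists o.
  by exists (U o); [exists o | exact: adm_cls HG GS Su].
- move=> _ [u ru ->].
  have : (\bigcup_(S in G) S) u by rewrite Gcov.
  by case => S GS Su; rewrite -(adm_cls HG GS Su).
Qed.

Lemma Comp_overlap : overlap_family mU U W 0 (Comp U W).
Proof.
split; first exact: Comp_adm.
by move=> G /adm_eq ->; exact: card_lexx.
Qed.

Lemma Idelta_fin k : Comp U W #= `I_k -> Idelta mU U W 0 = (log2 (k%:R : R))%:E.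
Proof.
move=> Ck; rewrite /Idelta.
case: pselect => [P|nP]; last by exfalso; apply: nP; exists (Comp U W); exact: Comp_overlap.
have FE : projT1 (cid P) = Comp U W.
  by case: (cid P) => F [FA _] /=; exact: adm_eq FA.
rewrite FE; case: pselect => [Q|nQ]; last by exfalso; apply: nQ; exists k.
case: (cid Q) => k' Ck' /=.
by have /card_eq_II -> : `I_k' #= `I_k by apply: card_eq_trans (card_esym Ck') Ck.
Qed.

Lemma Idelta_inf : ~ finite_set (Comp U W) -> Idelta mU U W 0 = +oo%E.
Proof.
move=> nf; rewrite /Idelta.
case: pselect => [P|nP]; last by exfalso; apply: nP; exists (Comp U W); exact: Comp_overlap.
have FE : projT1 (cid P) = Comp U W.
  by case: (cid P) => F [FA _] /=; exact: adm_eq FA.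
by rewrite FE; case: pselect => [Q|//]; exfalso; exact: nf.
Qed.

End Meas.

Section Prod.
Context {Omega X Y : Type} (n : nat) (Xs : 'I_n -> Omega -> X) (Ys : 'I_n -> Omega -> Y).
Hypothesis H1 : uv_range (uv_tuple Xs) = [set x | forall i, uv_range (Xs i) (x i)].
Hypothesis H2 : forall x, uv_range (uv_tuple Xs) x ->
     uv_cond (uv_tuple Ys) (uv_tuple Xs) x
       = [set y | forall i, uv_cond (Ys i) (Xs i) (x i) (y i)].

Lemma rXT x : range (uv_tuple Xs) x <-> forall i, range (Xs i) (x i).
Proof. by move: H1; rewrite /uv_range => ->. Qed.

Lemma chain_prod y y' : chain (uv_tuple Ys) (uv_tuple Xs) y y' <->
  forall i, chain (Ys i) (Xs i) (y i) (y' i).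
Proof.
split.
- move=> [N [w [N0 Hr H0 H' Hi]]] i; exists N, (fun j => w j i); split => //.
  + by move=> j jN; exact: (proj1 (rXT _) (Hr j jN)).
  + by move: H0; rewrite (H2 (Hr _ N0)); apply.
  + by move: H'; rewrite (H2 (Hr N.-1 ltac:(lia))); apply.
  + move=> j j0 jN; have [z [a b]] := Hi j j0 jN.
    move: a b; rewrite (H2 (Hr _ jN)) (H2 (Hr j.-1 ltac:(lia))) => a b.
    by exists (z i); split; [exact: a | exact: b].
- move=> Hc.
  have [Nf HN] := choice (fun i => Hc i).
  have [wf Hw] := choice (fun i => HN i).
  pose M := (\max_(i < n) Nf i)%N.
  have hM : forall i, (Nf i <= M)%N by move=> i; exact: leq_bigmax.
  exists M.+1, (fun j => fun i => wf i (minn j (Nf i).-1)).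
  have rx : forall j, range (uv_tuple Xs) (fun i => wf i (minn j (Nf i).-1)).
    move=> j; apply/rXT => i; have [N0 Hr _ _ _] := Hw i.
    by apply: Hr; lia.
  split.
  + by [].
  + by move=> j _; exact: rx.
  + rewrite (H2 (rx 0%N)) /= => i; have [_ _ c0 _ _] := Hw i.
    by rewrite min0n.
  + rewrite (H2 (rx M)) /= => i; have [N0 _ _ c1 _] := Hw i.
    by have -> : minn M (Nf i).-1 = (Nf i).-1 by have := hM i; lia.
  + move=> j j0 jM.
    have hz : forall i, exists t, uv_cond (Ys i) (Xs i) (wf i (minn j (Nf i).-1)) t /\
        uv_cond (Ys i) (Xs i) (wf i (minn j.-1 (Nf i).-1)) t.
      move=> i; have [N0 _ _ c1 Hi] := Hw i.
      have [h|h] := boolP (j <= (Nf i).-1)%N.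
      * have -> : minn j (Nf i).-1 = j by lia.
        have -> : minn j.-1 (Nf i).-1 = j.-1 by lia.
        by have [t [ta tb]] := Hi j j0 ltac:(lia); exists t.
      * have -> : minn j (Nf i).-1 = (Nf i).-1 by lia.
        have -> : minn j.-1 (Nf i).-1 = (Nf i).-1 by lia.
        by exists (y' i).
    have [z Hz] := choice hz.
    by exists z; rewrite (H2 (rx j)) (H2 (rx j.-1)); split => i; have [] := Hz i.
Qed.


Definition Pset := [set g : 'I_n -> set Y | forall i, Comp (Ys i) (Xs i) (g i)].
Definition psi (g : 'I_n -> set Y) := [set y : 'I_n -> Y | forall i, g i (y i)].

Lemma psiP : psi @` Pset = Comp (uv_tuple Ys) (uv_tuple Xs).
Proof.
apply/seteqP; split.
- move=> _ [g Pg <-].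
  have hu : forall i, exists u, uv_range (Ys i) u /\ g i = cls (Ys i) (Xs i) u.
    by move=> i; have [u ru e] := Pg i; exists u.
  have [u Hu] := choice hu.
  have cu : chain (uv_tuple Ys) (uv_tuple Xs) u u.
    by apply/chain_prod => i; apply: chain_refl; exact: (Hu i).1.
  exists u; first exact: (chain_range cu).1.
  apply/seteqP; split => y' h.
  + by apply/chain_prod => i; have := h i; rewrite (Hu i).2.
  + by move=> i; rewrite (Hu i).2; exact: (proj1 (chain_prod _ _) h i).
- move=> _ [y [o _ <-] ->].
  exists (fun i => cls (Ys i) (Xs i) (Ys i o)).
    by move=> i; exists (Ys i o) => //; exists o.
  apply/seteqP; split => y' h.
  + by apply/chain_prod.
  + by apply/chain_prod.
Qed.

Lemma psi_sub g g' : Pset g -> psi g = psi g' -> forall i, g i `<=` g' i.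
Proof.
move=> Pg e i t git.
have hu : forall j, exists u, g j u.
  by move=> j; have [u ru ->] := Pg j; exists u; exact: chain_refl.
have [u Hu] := choice hu.
pose y := fun j => if j == i then t else u j.
have : psi g y by move=> j; rewrite /y; case: eqP => [->|_] //.
by rewrite e => /(_ i); rewrite /y eqxx.
Qed.

Lemma psi_inj : {in Pset &, injective psi}.
Proof.
move=> g g' /set_mem Pg /set_mem Pg' e; apply/funext => i; apply/seteqP; split.
- exact: psi_sub Pg e i.
- exact: psi_sub Pg' (esym e) i.
Qed.

Lemma Comp_card : Comp (uv_tuple Ys) (uv_tuple Xs) #= Pset.
Proof. rewrite -psiP; exact: inj_card_eq psi_inj. Qed.

End Prod.

Lemma card_prodset (T : choiceType) n (s : 'I_n -> {fset T}) :
  [set g : 'I_n -> T | forall i, g i \in s i] #= `I_(\prod_(i < n) #|` s i|)%N.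
Proof.
pose F := {dffun forall i : 'I_n, s i}.
pose phi (f : F) := fun i => fsval (f i).
have phiP : phi @` setT = [set g : 'I_n -> T | forall i, g i \in s i].
  apply/seteqP; split.
  - by move=> _ [f _ <-] i; exact: fsvalP.
  - move=> g hg; exists (finfun (fun i => [` hg i]%fset) : F) => //.
    by apply/funext => i; rewrite /phi ffunE.
have phiI : {in setT &, injective phi}.
  move=> f1 f2 _ _ e; apply/ffunP => i; apply: val_inj.
  exact: (congr1 (fun h => h i) e).
rewrite -phiP; apply: card_eq_trans (inj_card_eq phiI) _.
have cardF : #|F| = (\prod_(i < n) #|` s i|)%N.
  rewrite card_dep_ffun foldrE big_map big_enum /=.
  by apply: eq_bigr => i _; rewrite cardfE.
rewrite -cardF; apply: card_eq_trans _ (card_esym card_II).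
have eR : enum_rank @` [set: F] = [set: 'I_#|F|].
  apply/seteqP; split => // k _; exists (enum_val k) => //; exact: enum_valK.
rewrite -eR; apply: card_esym; apply: inj_card_eq => x y _ _; exact: enum_rank_inj.
Qed.

Lemma ln_prod_seq (R : realType) (I : Type) (r : seq I) (F : I -> R) :
  (forall i, 0 < F i) ->
  0 < \prod_(i <- r) F i /\ ln (\prod_(i <- r) F i) = \sum_(i <- r) ln (F i).
Proof.
move=> Fp; elim: r => [|a r [IH1 IH2]]; first by rewrite !big_nil ln1.
rewrite !big_cons; split; first exact: mulr_gt0.
by rewrite lnM ?IH2 // posrE.
Qed.

Lemma Comp0 (Omega TU TW : Type) (U : Omega -> TU) (W : Omega -> TW) :
  ~ (exists o : Omega, True) -> Comp U W #= `I_0.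
Proof.
move=> nO; have -> : Comp U W = set0.
  by apply/seteqP; split => // S [u [o _ _]]; exfalso; apply: nO; exists o.
by rewrite II0; exact: card_eq00.
Qed.

Unset Implicit Arguments.

Theorem corollary1 (R : realType) (Omega X Y : Type) (n : nat)
  (m : forall k : nat, set ('I_k -> Y) -> R)
  (Xs : 'I_n -> Omega -> X) (Ys : 'I_n -> Omega -> Y) :
  (0 < n)%N ->
  uncertainty_family m ->
  product_uncertainty m ->
  union_bound m ->
  uv_range (uv_tuple Xs) = [set x | forall i, uv_range (Xs i) (x i)] ->
  (forall x, uv_range (uv_tuple Xs) x ->
     uv_cond (uv_tuple Ys) (uv_tuple Xs) x
       = [set y | forall i, uv_cond (Ys i) (Xs i) (x i) (y i)]) ->
  Idelta (m n) (uv_tuple Ys) (uv_tuple Xs) 0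
    = (\sum_(i < n) Idelta (m_one m) (Ys i) (Xs i) 0)%E.
Proof.
move=> n0 hfam hprod hub H1 H2.
have ufun k : (0 < k)%N -> (m k set0 = 0) /\ (forall S, S !=set0 -> 0 < m k S).
  by move=> k0; have [[? ? ?] _] := hfam k k0.
have [mn0 mnpos] := ufun n n0.
have [m10 m1pos] := ufun 1%N isT.
have mo0 : m_one m set0 = 0.
  rewrite /m_one; have -> : [set f : 'I_1 -> Y | set0 (f ord0)] = set0.
    by apply/seteqP; split => // f.
  exact: m10.
have mopos : forall S, S !=set0 -> 0 < m_one m S.
  by move=> S [s Ss]; apply: m1pos; exists (fun _ => s).
have CC := Comp_card H1 H2.
have l2 : 0 < ln (2 : R) by apply: ln_gt0; rewrite ltr1n.
case: (pselect (exists o : Omega, True)) => [[o _]|nO]; last first.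
  rewrite (Idelta_fin mn0 mnpos (Comp0 _ _ nO)) big1; last first.
    by move=> i _; rewrite (Idelta_fin mo0 mopos (Comp0 _ _ nO)) /log2 ln0 // mul0r.
  by rewrite /log2 ln0 // mul0r.
have Cne i : Comp (Ys i) (Xs i) (cls (Ys i) (Xs i) (Ys i o)).
  by exists (Ys i o) => //; exists o.
have kpos i k : Comp (Ys i) (Xs i) #= `I_k -> (0 < k)%N.
  case: (posnP k) => // -> ; rewrite II0 card_eq0 => /eqP e.
  by have := Cne i; rewrite e.
have Ige0 i : (0 <= Idelta (m_one m) (Ys i) (Xs i) 0)%E.
  case: (pselect (finite_set (Comp (Ys i) (Xs i)))) => [[k hk]|nf].
    rewrite (Idelta_fin mo0 mopos hk) lee_fin /log2 divr_ge0 //.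
      by apply: ln_ge0; rewrite ler1n; exact: kpos hk.
    exact: ltW.
  by rewrite (Idelta_inf mo0 mopos nf) leey.
case: (pselect (forall i, finite_set (Comp (Ys i) (Xs i)))) => [fin|nfin].
- have [kf hk] := choice fin.
  pose s i := fset_set (Comp (Ys i) (Xs i)).
  have eP : Pset Xs Ys = [set g : 'I_n -> set Y | forall i, g i \in s i].
    apply/seteqP; split => g h i.
    + by rewrite /s in_fset_set //; exact: mem_set (h i).
    + by have := h i; rewrite /s in_fset_set // => /set_mem.
  have hC : Comp (uv_tuple Ys) (uv_tuple Xs) #= `I_(\prod_(i < n) kf i)%N.
    have -> : (\prod_(i < n) kf i)%N = (\prod_(i < n) #|` s i|)%N.
      by apply: eq_bigr => i _; rewrite /s (card_fset_set (hk i)).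
    by apply: card_eq_trans CC _; rewrite eP; exact: card_prodset.
  rewrite (Idelta_fin mn0 mnpos hC).
  rewrite (eq_bigr (fun i => (log2 ((kf i)%:R : R))%:E)); last first.
    by move=> i _; have := Idelta_fin mo0 mopos (hk i).
  rewrite sumEFin; congr (_%:E).
  rewrite /log2 natr_prod -mulr_suml; congr (_ * _).
  have kp : forall i, 0 < ((kf i)%:R : R).
    by move=> i; rewrite ltr0n; exact: kpos (hk i).
  by have [_ ->] := @ln_prod_seq R _ (index_enum 'I_n) (fun i => (kf i)%:R) kp.
- have [j nj] : exists j, ~ finite_set (Comp (Ys j) (Xs j)).
    apply: contrapT => h; apply: nfin => i; apply: contrapT => hi; apply: h.
    by exists i.
  have ninf : ~ finite_set (Comp (uv_tuple Ys) (uv_tuple Xs)).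
    rewrite (eq_finite_set CC) => fP; apply: nj.
    pose h (S : set Y) := fun i => if i == j then S else cls (Ys i) (Xs i) (Ys i o).
    have hsub : h @` Comp (Ys j) (Xs j) `<=` Pset Xs Ys.
      move=> _ [S CS <-] i; rewrite /h; case: eqP => [->|_] //.
    have hinj : {in Comp (Ys j) (Xs j) &, injective h}.
      by move=> S1 S2 _ _ e; have := congr1 (fun f => f j) e; rewrite /h eqxx.
    rewrite -(eq_finite_set (inj_card_eq hinj)).
    exact: sub_finite_set hsub fP.
  rewrite (Idelta_inf mn0 mnpos ninf) (bigD1 j) //= (Idelta_inf mo0 mopos nj).
  have hs : (0 <= \sum_(i < n | i != j) Idelta (m_one m) (Ys i) (Xs i) 0)%E.
    by apply: sume_ge0 => i _; exact: Ige0.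
  move: hs; set r := (\sum_(i < n | i != j) _)%E.
  by case: r.
Qed.
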